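(* Let $\tau,\kappa,\nu:\mathbb{Z}^3\to\mathbb{R}\setminus\{0\}$ satisfy, in shift notation, $$\nu(\tau\tau_{123}-\tau_3\tau_{12})+\kappa_1(\tau_2\tau_3-\tau\tau_{23})+\kappa_2(\tau\tau_{13}-\tau_1\tau_3)=0,$$ $$\kappa_2(\tau\kappa_{12}-\tau_1\nu_2)+\tau_2(\nu_1\kappa_2-\tau_3\tau_{12})+\tau_{12}(\tau\tau_{23}-\nu\nu_2)=0,$$ $$\nu(\kappa_1\nu_2-\kappa_2\nu_1)+\kappa_1(\tau_2\tau_3-\tau\tau_{23})+\kappa_2(\tau\tau_{13}-\tau_1\tau_3)=0.$$ Then the linear lattice equations for $\Phi,\Psi,\boldsymbol\chi:\mathbb{Z}^3\to\mathbb{C}$ $$\Phi_{12}-\Phi=\frac{\tau_1\tau_2}{\tau\tau_{12}}(\Phi_1-\Phi_2),\qquad \boldsymbol\chi_1-\Phi=\frac{\nu\tau_1}{\kappa_1\tau}(\Phi_1-\Psi),$$ $$\Phi_{13}-\Psi=\frac{\kappa_1\tau_3}{\nu\tau_{13}}(\boldsymbol\chi_1-\Phi_3),\qquad \boldsymbol\chi_2-\Phi=\frac{\nu\tau_2}{\kappa_2\tau}(\Phi_2-\Psi),$$ $$\Phi_{23}-\Psi=\frac{\kappa_2\tau_3}{\nu\tau_{23}}(\boldsymbol\chi_2-\Phi_3),\qquad \Psi-\boldsymbol\chi=\frac{\tau\tau_3}{\kappa\nu}(\Phi_3-\Phi)$$ are compatible, and for any solution, at every point of $\mathbb{Z}^3$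 the points $\Psi,\boldsymbol\chi_{12},\Phi_1,\Phi_2,\Phi_{13},\Phi_{23}$ and $\Psi_1,\Psi_2,\boldsymbol\chi_1,\boldsymbol\chi_2,\Phi,\Phi_3,\Phi_{12},\Phi_{123}$ form a reciprocal pair of octahedral and hexahedral figures obeying the multi-ratio relations $$M(\Phi_{23},\Phi_{13},\Psi,\Phi_1,\Phi_2,\boldsymbol\chi_{12})=M(\Phi_{123},\Phi_3,\boldsymbol\chi_1,\Phi,\Phi_{12},\Psi_2),$$ $$M(\Phi_{13},\Phi_{23},\Psi,\Phi_2,\Phi_1,\boldsymbol\chi_{12})=M(\Phi_{123},\Phi_3,\boldsymbol\chi_2,\Phi,\Phi_{12},\Psi_1),$$ $$M(\boldsymbol\chi_{12},\Phi_{23},\Phi_2,\Psi,\Phi_1,\Phi_{13})=M(\Phi_{123},\Psi_2,\boldsymbol\chi_2,\Phi,\boldsymbol\chi_1,\Psi_1).$$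
   Context: Shift notation: for $f$ on $\mathbb{Z}^3$, $f=f(n_1,n_2,n_3)$, $f_1=f(n_1+1,n_2,n_3)$, $f_{12}=f(n_1+1,n_2+1,n_3)$, etc. $M(P_1,\dots,P_6)=\frac{(P_1-P_2)(P_3-P_4)(P_5-P_6)}{(P_2-P_3)(P_4-P_5)(P_6-P_1)}$. An octahedral figure with vertices $\Psi,\boldsymbol\chi_{12},\Phi_1,\Phi_2,\Phi_{13},\Phi_{23}$ has the twelve straight edges $\Phi_1\Phi_2$, $\Psi\Phi_1$, $\Psi\Phi_2$, $\Psi\Phi_{13}$, $\Psi\Phi_{23}$, $\Phi_{13}\Phi_{23}$, $\boldsymbol\chi_{12}\Phi_{13}$, $\boldsymbol\chi_{12}\Phi_{23}$, $\boldsymbol\chi_{12}\Phi_1$, $\boldsymbol\chi_{12}\Phi_2$, $\Phi_1\Phi_{13}$, $\Phi_2\Phi_{23}$. A hexahedral figure with vertices $\Psi_1,\Psi_2,\boldsymbol\chi_1,\boldsymbol\chi_2,\Phi,\Phi_3,\Phi_{12},\Phi_{123}$ is reciprocal to it when its twelve edges $\Phi\Phi_{12}$, $\Phi\boldsymbol\chi_1$, $\Phi\boldsymbol\chi_2$, $\boldsymbol\chi_1\Phi_3$, $\boldsymbol\chi_2\Phi_3$, $\Phi_3\Phi_{123}$, $\Psi_1\Phi_{123}$, $\Psi_2\Phi_{123}$, $\Phi_{12}\Psi_1$, $\Phi_{12}\Psi_2$, $\boldsymbol\chi_1\Psi_1$, $\boldsymbol\chi_2\Psi_2$ are respectively parallel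 to the twelve edges listed for the octahedral figure. *)

(* Defs.v *)
From mathcomp Require Import all_boot all_algebra.
From mathcomp Require Export complex.
From mathcomp Require Export reals.
Set Implicit Arguments. Unset Strict Implicit. Unset Printing Implicit Defensive.
Import GRing.Theory Num.Theory.
Local Open Scope ring_scope.
Local Open Scope complex_scope.

Section Defs.
Variable R : realType.
Local Notation C := R[i].

Definition lattice (T : Type) := int -> int -> int -> T.

Definition tau_system (tau kappa nu : lattice R) : Prop :=
  forall n1 n2 n3 : int,
  let t   := tau n1 n2 n3 in
  let t1  := tau (n1+1) n2 n3 in
  let t2  := tau n1 (n2+1) n3 in
  let t3  := tau n1 n2 (n3+1) in
  let t12 := tau (n1+1) (n2+1) n3 in
  let t13 := tau (n1+1) n2 (n3+1) in
  let t23 := tau n1 (n2+1) (n3+1) in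
  let t123 := tau (n1+1) (n2+1) (n3+1) in
  let k1  := kappa (n1+1) n2 n3 in
  let k2  := kappa n1 (n2+1) n3 in
  let k12 := kappa (n1+1) (n2+1) n3 in
  let v   := nu n1 n2 n3 in
  let v1  := nu (n1+1) n2 n3 in
  let v2  := nu n1 (n2+1) n3 in
  [/\ v * (t * t123 - t3 * t12) + k1 * (t2 * t3 - t * t23) + k2 * (t * t13 - t1 * t3) = 0,
      k2 * (t * k12 - t1 * v2) + t2 * (v1 * k2 - t3 * t12) + t12 * (t * t23 - v * v2) = 0
    & v * (k1 * v2 - k2 * v1) + k1 * (t2 * t3 - t * t23) + k2 * (t * t13 - t1 * t3) = 0].

Definition lin_eqs_at (tau kappa nu : lattice R) (Phi Psi chi : lattice C)
    (n1 n2 n3 : int) : Prop :=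
  let t   := tau n1 n2 n3 in
  let t1  := tau (n1+1) n2 n3 in
  let t2  := tau n1 (n2+1) n3 in
  let t3  := tau n1 n2 (n3+1) in
  let t12 := tau (n1+1) (n2+1) n3 in
  let t13 := tau (n1+1) n2 (n3+1) in
  let t23 := tau n1 (n2+1) (n3+1) in
  let k   := kappa n1 n2 n3 in
  let k1  := kappa (n1+1) n2 n3 in
  let k2  := kappa n1 (n2+1) n3 in
  let v   := nu n1 n2 n3 in
  let F   := Phi n1 n2 n3 in
  let F1  := Phi (n1+1) n2 n3 in
  let F2  := Phi n1 (n2+1) n3 in
  let F3  := Phi n1 n2 (n3+1) in
  let F12 := Phi (n1+1) (n2+1) n3 in
  let F13 := Phi (n1+1) n2 (n3+1) in
  let F23 := Phi n1 (n2+1) (n3+1) in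
  let P   := Psi n1 n2 n3 in
  let X   := chi n1 n2 n3 in
  let X1  := chi (n1+1) n2 n3 in
  let X2  := chi n1 (n2+1) n3 in
  F12 - F = ((t1 * t2) / (t * t12))%:C * (F1 - F2) /\
      X1 - F = ((v * t1) / (k1 * t))%:C * (F1 - P) /\
      F13 - P = ((k1 * t3) / (v * t13))%:C * (X1 - F3) /\
      X2 - F = ((v * t2) / (k2 * t))%:C * (F2 - P) /\
      F23 - P = ((k2 * t3) / (v * t23))%:C * (X2 - F3) /\
      P - X = ((t * t3) / (k * v))%:C * (F3 - F).

(* Compatibility (consistency around the elementary cube): starting from
   arbitrary values of Phi, Phi_1, Phi_2, Phi_3, chi at a point, the system
   imposed at n, n+e1, n+e2, n+e3 (which computes chi_12 in two ways and
   Phi_123 in three ways) always admits a solution. *)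
Definition compatible (tau kappa nu : lattice R) : Prop :=
  forall (n1 n2 n3 : int) (a a1 a2 a3 x : C),
  exists (Phi Psi chi : lattice C),
    [/\ Phi n1 n2 n3 = a, Phi (n1+1) n2 n3 = a1, Phi n1 (n2+1) n3 = a2,
        Phi n1 n2 (n3+1) = a3 & chi n1 n2 n3 = x] /\
    [/\ lin_eqs_at tau kappa nu Phi Psi chi n1 n2 n3,
        lin_eqs_at tau kappa nu Phi Psi chi (n1+1) n2 n3,
        lin_eqs_at tau kappa nu Phi Psi chi n1 (n2+1) n3
      & lin_eqs_at tau kappa nu Phi Psi chi n1 n2 (n3+1)].

Definition multiratio (P1 P2 P3 P4 P5 P6 : C) : C :=
  ((P1 - P2) * (P3 - P4) * (P5 - P6)) / ((P2 - P3) * (P4 - P5) * (P6 - P1)).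

Definition parallel (u v : C) : Prop := Im (u * v^*) = 0.

Definition reciprocal (oP oX12 oF1 oF2 oF13 oF23 : C)
    (hP1 hP2 hX1 hX2 hF hF3 hF12 hF123 : C) : Prop :=
  parallel (hF12 - hF) (oF2 - oF1) /\
      parallel (hX1 - hF) (oF1 - oP) /\
      parallel (hX2 - hF) (oF2 - oP) /\
      parallel (hF3 - hX1) (oF13 - oP) /\
      parallel (hF3 - hX2) (oF23 - oP) /\
      parallel (hF123 - hF3) (oF23 - oF13) /\
      parallel (hF123 - hP1) (oF13 - oX12) /\
      parallel (hF123 - hP2) (oF23 - oX12) /\
      parallel (hP1 - hF12) (oF1 - oX12) /\
      parallel (hP2 - hF12) (oF2 - oX12) /\
      parallel (hP1 - hX1) (oF1 - oF13) /\
      parallel (hP2 - hX2) (oF2 - oF23).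

End Defs.

(* Main.v *)
Require Import Defs.
From mathcomp Require Import all_boot all_algebra.
From mathcomp Require Import complex reals.
From mathcomp Require Import ring.
Import GRing.Theory Num.Theory.
Local Open Scope ring_scope.
Local Open Scope complex_scope.
Lemma consts (F : fieldType) (t t1 t2 t3 t12 t13 t23 t123 k1 k2 k12 v v1 v2 : F) :
  t != 0 -> t1 != 0 -> t2 != 0 -> t3 != 0 -> t12 != 0 -> t13 != 0 -> t23 != 0 -> t123 != 0 ->
  k1 != 0 -> k2 != 0 -> k12 != 0 -> v != 0 -> v1 != 0 -> v2 != 0 ->
  v * (t * t123 - t3 * t12) + k1 * (t2 * t3 - t * t23) + k2 * (t * t13 - t1 * t3) = 0 ->
  k2 * (t * k12 - t1 * v2) + t2 * (v1 * k2 - t3 * t12) + t12 * (t * t23 - v * v2) = 0 ->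
  v * (k1 * v2 - k2 * v1) + k1 * (t2 * t3 - t * t23) + k2 * (t * t13 - t1 * t3) = 0 ->
  [/\ (- (t13*t23/(t3*t123))) * (- (v*t1/(k1*t))) * (-1) * ((k1*t3/(v*t13)) * 1 * 1)
      = (-1) * (- (t1*t2/(t*t12))) * (- (k12*t23/(v2*t123))) * (1 * 1 * (v2*t12/(k12*t2))),
      (t13*t23/(t3*t123)) * (- (v*t2/(k2*t))) * (-1) * ((k2*t3/(v*t23)) * 1 * 1)
      = (-1) * (t1*t2/(t*t12)) * (- (k12*t13/(v1*t123))) * (1 * 1 * (v1*t12/(k12*t1)))
    & (k12*t23/(v2*t123)) * (v*t2/(k2*t)) * (t1*t13/(k1*v1)) * (1 * 1 * 1)
      = (t2*t23/(k2*v2)) * (v*t1/(k1*t)) * (k12*t13/(v1*t123)) * (1 * 1 * 1)].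
Proof.
move=> nt nt1 nt2 nt3 nt12 nt13 nt23 nt123 nk1 nk2 nk12 nv nv1 nv2 E1 E2 E3.
have e123 : t123 = (t3*t12 + k1*v2 - k2*v1)/t.
  apply: (mulIf nt); rewrite mulfVK //. 
  have : v * (t * t123 - t3 * t12) = v * (k1 * v2 - k2 * v1).
    by apply/eqP; rewrite -subr_eq0; apply/eqP; rewrite -[RHS](subrr (0:F)) -{1}E1 -E3; ring.
  move/(mulfI nv) => H; rewrite -[t123 * t]/(t123 * t) mulrC. 
  by rewrite -[t*t123](subrK (t3*t12)) H; ring.
have e12 : k12 = (t1*v2*k2 - t2*(v1*k2 - t3*t12) - t12*(t*t23 - v*v2))/(k2*t).
  apply: (mulIf (mulf_neq0 nk2 nt)); rewrite mulfVK ?mulf_neq0 //.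
  by apply/eqP; rewrite -subr_eq0; apply/eqP; rewrite -E2; ring.
have e13 : t13 = (k2*t1*t3 - v * (k1 * v2 - k2 * v1) - k1 * (t2 * t3 - t * t23))/(k2*t).
  apply: (mulIf (mulf_neq0 nk2 nt)); rewrite mulfVK ?mulf_neq0 //.
  by apply/eqP; rewrite -subr_eq0; apply/eqP; rewrite -E3; ring.
clear E1 E2 E3.
have n123 : t3*t12 + k1*v2 - k2*v1 != 0.
  by move: nt123; rewrite e123 mulf_eq0 negb_or => /andP[].
have n12 : t1*v2*k2 - t2*(v1*k2 - t3*t12) - t12*(t*t23 - v*v2) != 0.
  by move: nk12; rewrite e12 mulf_eq0 negb_or => /andP[].
have n13 : k2*t1*t3 - v * (k1 * v2 - k2 * v1) - k1 * (t2 * t3 - t * t23) != 0.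
  by move: nt13; rewrite e13 mulf_eq0 negb_or => /andP[].
subst t123 k12 t13.
split; field; by rewrite ?nt ?nt1 ?nt2 ?nt3 ?nt12 ?nt23 ?nk1 ?nk2 ?nv ?nv1 ?nv2 ?n123 ?n12 ?n13.
Qed.
Arguments consts {F t t1 t2 t3 t12 t13 t23 t123 k1 k2 k12 v v1 v2}.
Lemma par_base1 (R : realType) (r : R) (w : R[i]) : parallel (r%:C * w) w.
Proof. case: w => a b; rewrite /parallel -complexIm.
 have -> : Num.conj (a +i* b) = (a +i* b)^*%C by []. simpc; rewrite /=.
 have -> : - (r * a * b) + r * b * a = 0 by ring. by rewrite rmorph0. Qed.
Lemma par_base2 (R : realType) (r : R) (w : R[i]) : parallel w (r%:C * w).
Proof. case: w => a b; rewrite /parallel -complexIm.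
 have -> : Num.conj (r%:C * (a +i* b)) = (r%:C * (a +i* b))^*%C by []. simpc; rewrite /=.
 have -> : - (a * (r*b)) + b * (r*a) = 0 by ring. by rewrite rmorph0. Qed.
Lemma negC (R : realType) (r : R) (a b : R[i]) : r%:C * (b - a) = (- r)%:C * (a - b).
Proof. rewrite rmorphN /=; ring. Qed.
Lemma pA (R : realType) (r : R) (u a b : R[i]) : u = r%:C * (a - b) -> parallel u (a - b).
Proof. by move->; apply: par_base1. Qed.
Lemma pB (R : realType) (r : R) (u a b : R[i]) : u = r%:C * (b - a) -> parallel u (a - b).
Proof. by rewrite negC => ->; apply: par_base1. Qed.
Lemma pC (R : realType) (r : R) (a b d e : R[i]) : a - b = r%:C * (d - e) -> parallel (e - d) (a - b).
Proof. by rewrite negC => ->; apply: par_base2. Qed.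
Lemma pD (R : realType) (r : R) (a b d e : R[i]) : b - a = r%:C * (e - d) -> parallel (d - e) (a - b).
Proof. move=> H. have -> : a - b = r%:C * (d - e) by rewrite -opprB H; ring.
 by apply: par_base2. Qed.
Lemma scale_rel (R : realType) (a b : R) (u w : R[i]) : a != 0 ->
  a%:C * u = b%:C * w -> u = (b / a)%:C * w.
Proof.
move=> na H. have nC : a%:C != 0 by rewrite fmorph_eq0.
apply: (mulfI nC); rewrite H rmorphM fmorphV /=; field; exact: nC.
Qed.

Arguments scale_rel {R a b u w}.
Lemma mr_scale (R : realType) (p1 p2 p3 p4 p5 p6 q1 q2 q3 q4 q5 q6 : R[i])
  (a1 a2 a3 a4 a5 a6 b1 b2 b3 b4 b5 b6 : R) :
 a1%:C * (q1 - q2) = b1%:C * (p1 - p2) ->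
 a2%:C * (q3 - q4) = b2%:C * (p3 - p4) ->
 a3%:C * (q5 - q6) = b3%:C * (p5 - p6) ->
 a4%:C * (q2 - q3) = b4%:C * (p2 - p3) ->
 a5%:C * (q4 - q5) = b5%:C * (p4 - p5) ->
 a6%:C * (q6 - q1) = b6%:C * (p6 - p1) ->
 a1 != 0 -> a2 != 0 -> a3 != 0 -> a4 != 0 -> a5 != 0 -> a6 != 0 ->
 b4 != 0 -> b5 != 0 -> b6 != 0 ->
 b1 * b2 * b3 * (a4 * a5 * a6) = b4 * b5 * b6 * (a1 * a2 * a3) ->
 multiratio p1 p2 p3 p4 p5 p6 = multiratio q1 q2 q3 q4 q5 q6.
Proof.
move=> H1 H2 H3 H4 H5 H6 n1 n2 n3 n4 n5 n6 m4 m5 m6 HK.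
rewrite /multiratio (scale_rel n1 H1) (scale_rel n2 H2) (scale_rel n3 H3)
  (scale_rel n4 H4) (scale_rel n5 H5) (scale_rel n6 H6).
have EK : b1 / a1 * (b2 / a2) * (b3 / a3) = b4 / a4 * (b5 / a5) * (b6 / a6).
  have -> : b1 / a1 * (b2 / a2) * (b3 / a3) = (b1 * b2 * b3 * (a4 * a5 * a6)) / (a1*a2*a3*(a4*a5*a6)).
    by field; rewrite !n1 !n2 !n3 !n4 !n5 !n6.
  rewrite HK; field; by rewrite !n1 !n2 !n3 !n4 !n5 !n6.
have nK : b4 / a4 * (b5 / a5) * (b6 / a6) != 0.
  by rewrite !mulf_neq0 ?invr_neq0.
set K := b4 / a4 * (b5 / a5) * (b6 / a6) in EK nK.
have nKC : K%:C != 0 by rewrite fmorph_eq0.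
set w1 := p1 - p2. set w2 := p3 - p4. set w3 := p5 - p6.
set w4 := p2 - p3. set w5 := p4 - p5. set w6 := p6 - p1.
have -> : (b1 / a1)%:C * w1 * ((b2 / a2)%:C * w2) * ((b3 / a3)%:C * w3)
   = K%:C * (w1 * w2 * w3) by rewrite -EK !rmorphM /=; ring.
have -> : (b4 / a4)%:C * w4 * ((b5 / a5)%:C * w5) * ((b6 / a6)%:C * w6)
   = K%:C * (w4 * w5 * w6) by rewrite /K !rmorphM /=; ring.
by rewrite [(K%:C * _)^-1]invfM mulrACA mulfV // mul1r.
Qed.
Lemma R1 (R : realType) (c : R) (u w : R[i]) : u = c%:C * w -> 1%:C * u = c%:C * w.
Proof. by move->; rewrite rmorph1 mul1r. Qed.
Lemma R2 (R : realType) (c : R) (u x y : R[i]) : u = c%:C * (y - x) -> 1%:C * u = (-c)%:C * (x - y).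
Proof. by move->; rewrite rmorph1 rmorphN /=; ring. Qed.
Lemma R3 (R : realType) (c : R) (u x y : R[i]) : y - x = c%:C * u -> c%:C * u = (-1)%:C * (x - y).
Proof. by move<-; rewrite rmorphN rmorph1; ring. Qed.
Lemma R5 (R : realType) (c : R) (x y v z : R[i]) : x - y = c%:C * (v - z) -> c%:C * (z - v) = (-1)%:C * (x - y).
Proof. by move->; rewrite rmorphN rmorph1; ring. Qed.
Lemma R6 (R : realType) (c : R) (w x y : R[i]) : y - x = c%:C * w -> 1%:C * (x - y) = (-c)%:C * w.
Proof. by move=> H; rewrite rmorph1 rmorphN /= mulNr -H; ring. Qed.
Lemma R7 (R : realType) (c : R) (x y v z : R[i]) : y - x = c%:C * (z - v) -> 1%:C * (x - y) = c%:C * (v - z).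
Proof. by move=> H; rewrite rmorph1 mul1r -opprB H; ring. Qed.
Arguments R1 {R c u w}. Arguments R2 {R c u x y}. Arguments R3 {R c u x y}.
Arguments R5 {R c x y v z}. Arguments R6 {R c w x y}. Arguments R7 {R c x y v z}.
Arguments mr_scale {R p1 p2 p3 p4 p5 p6 q1 q2 q3 q4 q5 q6 a1 a2 a3 a4 a5 a6 b1 b2 b3 b4 b5 b6}.
Lemma core (F : fieldType) (t t1 t2 t3 t12 t13 t23 t123 k k1 k2 k12 v v1 v2 a a1 a2 a3 x : F) :
  t != 0 -> t1 != 0 -> t2 != 0 -> t3 != 0 -> t12 != 0 -> t13 != 0 -> t23 != 0 -> t123 != 0 ->
  k != 0 -> k1 != 0 -> k2 != 0 -> k12 != 0 -> v != 0 -> v1 != 0 -> v2 != 0 ->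
  v * (t * t123 - t3 * t12) + k1 * (t2 * t3 - t * t23) + k2 * (t * t13 - t1 * t3) = 0 ->
  k2 * (t * k12 - t1 * v2) + t2 * (v1 * k2 - t3 * t12) + t12 * (t * t23 - v * v2) = 0 ->
  v * (k1 * v2 - k2 * v1) + k1 * (t2 * t3 - t * t23) + k2 * (t * t13 - t1 * t3) = 0 ->
  let P := x + (t*t3/(k*v)) * (a3 - a) in
  let X1 := a + (v*t1/(k1*t)) * (a1 - P) in
  let F13 := P + (k1*t3/(v*t13)) * (X1 - a3) in
  let X2 := a + (v*t2/(k2*t)) * (a2 - P) in
  let F23 := P + (k2*t3/(v*t23)) * (X2 - a3) in
  let F12 := a + (t1*t2/(t*t12)) * (a1 - a2) in
  let P1 := X1 + (t1*t13/(k1*v1)) * (F13 - a1) in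
  let X12 := a1 + (v1*t12/(k12*t1)) * (F12 - P1) in
  let F123 := P1 + (k12*t13/(v1*t123)) * (X12 - F13) in
  let P2 := X2 + (t2*t23/(k2*v2)) * (F23 - a2) in
  [/\ X12 - a2 = (v2*t12/(k12*t2)) * (F12 - P2),
      F123 - P2 = (k12*t23/(v2*t123)) * (X12 - F23)
    & F123 - a3 = (t13*t23/(t3*t123))*(F13 - F23)].
Proof.
move=> nt nt1 nt2 nt3 nt12 nt13 nt23 nt123 nk nk1 nk2 nk12 nv nv1 nv2 E1 E2 E3.
have e123 : t123 = (t3*t12 + k1*v2 - k2*v1)/t.
  apply: (mulIf nt); rewrite mulfVK //. 
  have : v * (t * t123 - t3 * t12) = v * (k1 * v2 - k2 * v1).
    by apply/eqP; rewrite -subr_eq0; apply/eqP; rewrite -[RHS](subrr (0:F)) -{1}E1 -E3; ring.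
  move/(mulfI nv) => H; rewrite -[t123 * t]/(t123 * t) mulrC. 
  by rewrite -[t*t123](subrK (t3*t12)) H; ring.
have e12 : k12 = (t1*v2*k2 - t2*(v1*k2 - t3*t12) - t12*(t*t23 - v*v2))/(k2*t).
  apply: (mulIf (mulf_neq0 nk2 nt)); rewrite mulfVK ?mulf_neq0 //.
  by apply/eqP; rewrite -subr_eq0; apply/eqP; rewrite -E2; ring.
have e13 : t13 = (k2*t1*t3 - v * (k1 * v2 - k2 * v1) - k1 * (t2 * t3 - t * t23))/(k2*t).
  apply: (mulIf (mulf_neq0 nk2 nt)); rewrite mulfVK ?mulf_neq0 //.
  by apply/eqP; rewrite -subr_eq0; apply/eqP; rewrite -E3; ring.
clear E1 E2 E3.
have n123 : t3*t12 + k1*v2 - k2*v1 != 0.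
  by move: nt123; rewrite e123 mulf_eq0 negb_or => /andP[].
have n12 : t1*v2*k2 - t2*(v1*k2 - t3*t12) - t12*(t*t23 - v*v2) != 0.
  by move: nk12; rewrite e12 mulf_eq0 negb_or => /andP[].
have n13 : k2*t1*t3 - v * (k1 * v2 - k2 * v1) - k1 * (t2 * t3 - t * t23) != 0.
  by move: nt13; rewrite e13 mulf_eq0 negb_or => /andP[].
subst t123 k12 t13.
move=> P X1 F13 X2 F23 F12 P1 X12 F123 P2.
rewrite /P2 /F123 /X12 /P1 /F12 /F23 /X2 /F13 /X1 /P.
split; field; by rewrite ?nt ?nt1 ?nt2 ?nt3 ?nt12 ?nt23 ?nk ?nk1 ?nk2 ?nv ?nv1 ?nv2 ?n123 ?n12 ?n13.
Qed.
Arguments core {F t t1 t2 t3 t12 t13 t23 t123 k k1 k2 k12 v v1 v2 a a1 a2 a3 x}.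

Lemma core_R (R : realType) (t t1 t2 t3 t12 t13 t23 t123 k k1 k2 k12 v v1 v2 : R)
  (a a1 a2 a3 x : R[i]) :
  t != 0 -> t1 != 0 -> t2 != 0 -> t3 != 0 -> t12 != 0 -> t13 != 0 -> t23 != 0 -> t123 != 0 ->
  k != 0 -> k1 != 0 -> k2 != 0 -> k12 != 0 -> v != 0 -> v1 != 0 -> v2 != 0 ->
  v * (t * t123 - t3 * t12) + k1 * (t2 * t3 - t * t23) + k2 * (t * t13 - t1 * t3) = 0 ->
  k2 * (t * k12 - t1 * v2) + t2 * (v1 * k2 - t3 * t12) + t12 * (t * t23 - v * v2) = 0 ->
  v * (k1 * v2 - k2 * v1) + k1 * (t2 * t3 - t * t23) + k2 * (t * t13 - t1 * t3) = 0 ->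
  let P := x + ((t*t3)/(k*v))%:C * (a3 - a) in
  let X1 := a + ((v*t1)/(k1*t))%:C * (a1 - P) in
  let F13 := P + ((k1*t3)/(v*t13))%:C * (X1 - a3) in
  let X2 := a + ((v*t2)/(k2*t))%:C * (a2 - P) in
  let F23 := P + ((k2*t3)/(v*t23))%:C * (X2 - a3) in
  let F12 := a + ((t1*t2)/(t*t12))%:C * (a1 - a2) in
  let P1 := X1 + ((t1*t13)/(k1*v1))%:C * (F13 - a1) in
  let X12 := a1 + ((v1*t12)/(k12*t1))%:C * (F12 - P1) in
  let F123 := P1 + ((k12*t13)/(v1*t123))%:C * (X12 - F13) in
  let P2 := X2 + ((t2*t23)/(k2*v2))%:C * (F23 - a2) in
  [/\ X12 - a2 = ((v2*t12)/(k12*t2))%:C * (F12 - P2),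
      F123 - P2 = ((k12*t23)/(v2*t123))%:C * (X12 - F23)
    & F123 - a3 = ((t13*t23)/(t3*t123))%:C * (F13 - F23)].
Proof.
move=> nt nt1 nt2 nt3 nt12 nt13 nt23 nt123 nk nk1 nk2 nk12 nv nv1 nv2 E1 E2 E3.
have mE : forall y : R, y = 0 -> y%:C = 0 by move=> y ->; rewrite rmorph0.
have := mE _ E1; rewrite !(rmorphD, rmorphN, rmorphB, rmorphM) => {}E1.
have := mE _ E2; rewrite !(rmorphD, rmorphN, rmorphB, rmorphM) => {}E2.
have := mE _ E3; rewrite !(rmorphD, rmorphN, rmorphB, rmorphM) => {}E3.
have nC : forall y : R, y != 0 -> y%:C != 0 by move=> y; rewrite fmorph_eq0.
have H := core (nC _ nt) (nC _ nt1) (nC _ nt2) (nC _ nt3) (nC _ nt12) (nC _ nt13)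
  (nC _ nt23) (nC _ nt123) (nC _ nk) (nC _ nk1) (nC _ nk2) (nC _ nk12) (nC _ nv)
  (nC _ nv1) (nC _ nv2) E1 E2 E3 (a:=a) (a1:=a1) (a2:=a2) (a3:=a3) (x:=x).
cbv zeta; rewrite !(rmorphM, fmorphV).
move: H; cbv zeta; exact.
Qed.
Arguments core_R {R t t1 t2 t3 t12 t13 t23 t123 k k1 k2 k12 v v1 v2 a a1 a2 a3 x}.
Lemma off0 (z : int) : z - z = Posz 0%N. Proof. by rewrite subrr. Qed.
Lemma off1 (z : int) : z + 1 - z = Posz 1%N. Proof. by rewrite addrC addKr. Qed.
Lemma off2 (z : int) : z + 1 + 1 - z = Posz 2%N. Proof. have -> : z + 1 + 1 - z = 1 + 1 by ring. by []. Qed.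
Lemma addKC (V : zmodType) (x y : V) : x + y - x = y.
Proof. by rewrite addrC addKr. Qed.

Lemma compat_proof (R : realType) (tau kappa nu : lattice R) :
  (forall n1 n2 n3 : int,
     [/\ tau n1 n2 n3 != 0, kappa n1 n2 n3 != 0 & nu n1 n2 n3 != 0]) ->
  tau_system tau kappa nu ->
  compatible tau kappa nu.
Proof.
move=> Hnz Hsys n1 n2 n3 a a1 a2 a3 x.
pose c1 i j l := ((tau (i+1) j l * tau i (j+1) l) / (tau i j l * tau (i+1) (j+1) l))%:C.
pose c2 i j l := ((nu i j l * tau (i+1) j l) / (kappa (i+1) j l * tau i j l))%:C.
pose c3 i j l := ((kappa (i+1) j l * tau i j (l+1)) / (nu i j l * tau (i+1) j (l+1)))%:C.
pose c4 i j l := ((nu i j l * tau i (j+1) l) / (kappa i (j+1) l * tau i j l))%:C.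
pose c5 i j l := ((kappa i (j+1) l * tau i j (l+1)) / (nu i j l * tau i (j+1) (l+1)))%:C.
pose c6 i j l := ((tau i j l * tau i j (l+1)) / (kappa i j l * nu i j l))%:C.
pose P := x + c6 n1 n2 n3 * (a3 - a).
pose X1 := a + c2 n1 n2 n3 * (a1 - P).
pose F13 := P + c3 n1 n2 n3 * (X1 - a3).
pose X2 := a + c4 n1 n2 n3 * (a2 - P).
pose F23 := P + c5 n1 n2 n3 * (X2 - a3).
pose F12 := a + c1 n1 n2 n3 * (a1 - a2).
pose P1 := X1 + c6 (n1+1) n2 n3 * (F13 - a1).
pose X12 := a1 + c4 (n1+1) n2 n3 * (F12 - P1).
pose F123 := P1 + c5 (n1+1) n2 n3 * (X12 - F13).
pose P2 := X2 + c6 n1 (n2+1) n3 * (F23 - a2).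
pose P3 := 0 + c6 n1 n2 (n3+1) * (0 - a3).
pose F210 := a1 + c1 (n1+1) n2 n3 * (0 - F12).
pose X200 := a1 + c2 (n1+1) n2 n3 * (0 - P1).
pose F201 := P1 + c3 (n1+1) n2 n3 * (X200 - F13).
pose F120 := a2 + c1 n1 (n2+1) n3 * (F12 - 0).
pose X020 := a2 + c4 n1 (n2+1) n3 * (0 - P2).
pose F021 := P2 + c5 n1 (n2+1) n3 * (X020 - F23).
pose X101 := a3 + c2 n1 n2 (n3+1) * (F13 - P3).
pose F102 := P3 + c3 n1 n2 (n3+1) * (X101 - 0).
pose X011 := a3 + c4 n1 n2 (n3+1) * (F23 - P3).
pose F012 := P3 + c5 n1 n2 (n3+1) * (X011 - 0).
pose Phi := fun i j l : int => match (i - n1, j - n2, l - n3) with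
 | (Posz 0%N, Posz 0%N, Posz 0%N) => a
 | (Posz 1%N, Posz 0%N, Posz 0%N) => a1
 | (Posz 0%N, Posz 1%N, Posz 0%N) => a2
 | (Posz 0%N, Posz 0%N, Posz 1%N) => a3
 | (Posz 1%N, Posz 1%N, Posz 0%N) => F12
 | (Posz 1%N, Posz 0%N, Posz 1%N) => F13
 | (Posz 0%N, Posz 1%N, Posz 1%N) => F23
 | (Posz 1%N, Posz 1%N, Posz 1%N) => F123
 | (Posz 2%N, Posz 1%N, Posz 0%N) => F210
 | (Posz 2%N, Posz 0%N, Posz 1%N) => F201
 | (Posz 1%N, Posz 2%N, Posz 0%N) => F120
 | (Posz 0%N, Posz 2%N, Posz 1%N) => F021
 | (Posz 1%N, Posz 0%N, Posz 2%N) => F102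
 | (Posz 0%N, Posz 1%N, Posz 2%N) => F012
 | _ => 0 end.
pose chi := fun i j l : int => match (i - n1, j - n2, l - n3) with
 | (Posz 0%N, Posz 0%N, Posz 0%N) => x
 | (Posz 1%N, Posz 0%N, Posz 0%N) => X1
 | (Posz 0%N, Posz 1%N, Posz 0%N) => X2
 | (Posz 1%N, Posz 1%N, Posz 0%N) => X12
 | (Posz 2%N, Posz 0%N, Posz 0%N) => X200
 | (Posz 0%N, Posz 2%N, Posz 0%N) => X020
 | (Posz 1%N, Posz 0%N, Posz 1%N) => X101
 | (Posz 0%N, Posz 1%N, Posz 1%N) => X011
 | _ => 0 end.
pose Psi := fun i j l : int => match (i - n1, j - n2, l - n3) with
 | (Posz 0%N, Posz 0%N, Posz 0%N) => P
 | (Posz 1%N, Posz 0%N, Posz 0%N) => P1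
 | (Posz 0%N, Posz 1%N, Posz 0%N) => P2
 | (Posz 0%N, Posz 0%N, Posz 1%N) => P3
 | _ => 0 end.
exists Phi, Psi, chi.
rewrite /lin_eqs_at /Phi /Psi /chi; cbv beta zeta.
rewrite ?off2 ?off1 ?off0; cbv iota.
split; first by split.
have [E1 E2 E3] := Hsys n1 n2 n3.
have [z1 z2 z3] := Hnz n1 n2 n3.
have [z4 z5 z6] := Hnz (n1+1) n2 n3.
have [z7 z8 z9] := Hnz n1 (n2+1) n3.
have [z10 z11 z12] := Hnz n1 n2 (n3+1).
have [z13 z14 z15] := Hnz (n1+1) (n2+1) n3.
have [z16 z17 z18] := Hnz (n1+1) n2 (n3+1).
have [z19 z20 z21] := Hnz n1 (n2+1) (n3+1).
have [z22 z23 z24] := Hnz (n1+1) (n2+1) (n3+1).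
have [K1 K2 K3] := core_R (a:=a) (a1:=a1) (a2:=a2) (a3:=a3) (x:=x)
  z1 z4 z7 z10 z13 z16 z19 z22 z2 z5 z8 z14 z3 z6 z9 E1 E2 E3.
repeat split; try exact: addKC.
- exact: K1.
- exact: K2.
- exact: K3.
Qed.
Ltac nzt := rewrite ?(oppr_eq0, mulf_eq0, invr_eq0, negb_or, oner_eq0) /=;
  repeat match goal with H : is_true (_ != 0) |- _ => rewrite ?H; move: H end; intros; try done.

Theorem theorem9 (R : realType) (tau kappa nu : lattice R) :
  (forall n1 n2 n3 : int,
     [/\ tau n1 n2 n3 != 0, kappa n1 n2 n3 != 0 & nu n1 n2 n3 != 0]) ->
  tau_system tau kappa nu ->
  compatible tau kappa nu /\
  (forall Phi Psi chi : lattice R[i],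
     (forall n1 n2 n3 : int, lin_eqs_at tau kappa nu Phi Psi chi n1 n2 n3) ->
     forall n1 n2 n3 : int,
     let F    := Phi n1 n2 n3 in
     let F1   := Phi (n1+1) n2 n3 in
     let F2   := Phi n1 (n2+1) n3 in
     let F3   := Phi n1 n2 (n3+1) in
     let F12  := Phi (n1+1) (n2+1) n3 in
     let F13  := Phi (n1+1) n2 (n3+1) in
     let F23  := Phi n1 (n2+1) (n3+1) in
     let F123 := Phi (n1+1) (n2+1) (n3+1) in
     let P    := Psi n1 n2 n3 in
     let P1   := Psi (n1+1) n2 n3 in
     let P2   := Psi n1 (n2+1) n3 in
     let X1   := chi (n1+1) n2 n3 in
     let X2   := chi n1 (n2+1) n3 in
     let X12  := chi (n1+1) (n2+1) n3 in
     [/\ reciprocal P X12 F1 F2 F13 F23 P1 P2 X1 X2 F F3 F12 F123,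
         multiratio F23 F13 P F1 F2 X12 = multiratio F123 F3 X1 F F12 P2,
         multiratio F13 F23 P F2 F1 X12 = multiratio F123 F3 X2 F F12 P1
       & multiratio X12 F23 F2 P F1 F13 = multiratio F123 P2 X2 F X1 P1]).
Proof.
move=> Hnz Hsys; split.
  exact: (compat_proof _ _ _ _ Hnz Hsys).
move=> Phi Psi chi H n1 n2 n3; cbv zeta.
have := H n1 n2 n3; rewrite /lin_eqs_at; cbv zeta => -[A1 [A2 [A3 [A4 [A5 A6]]]]].
have := H (n1+1) n2 n3; rewrite /lin_eqs_at; cbv zeta => -[B1 [B2 [B3 [B4 [B5 B6]]]]].
have := H n1 (n2+1) n3; rewrite /lin_eqs_at; cbv zeta => -[C1 [C2 [C3 [C4 [C5 C6]]]]].
have := H n1 n2 (n3+1); rewrite /lin_eqs_at; cbv zeta => -[D1 [D2 [D3 [D4 [D5 D6]]]]].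
have := Hsys n1 n2 n3; cbv zeta => -[E1 E2 E3].
have [z1 z2 z3] := Hnz n1 n2 n3.
have [z4 z5 z6] := Hnz (n1+1) n2 n3.
have [z7 z8 z9] := Hnz n1 (n2+1) n3.
have [z10 z11 z12] := Hnz n1 n2 (n3+1).
have [z13 z14 z15] := Hnz (n1+1) (n2+1) n3.
have [z16 z17 z18] := Hnz (n1+1) n2 (n3+1).
have [z19 z20 z21] := Hnz n1 (n2+1) (n3+1).
have [z22 z23 z24] := Hnz (n1+1) (n2+1) (n3+1).
have [K1 K2 K3] := consts z1 z4 z7 z10 z13 z16 z19 z22 z5 z8 z14 z3 z6 z9 E1 E2 E3.
split.
- split; first exact: pB A1.
  split; first exact: pA A2.
  split; first exact: pA A4.
  split; first exact: pC A3.
  split; first exact: pC A5.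
  split; first exact: pB D1.
  split; first exact: pB B5.
  split; first exact: pB C3.
  split; first exact: pD B4.
  split; first exact: pD C2.
  split; first exact: pB B6.
  exact: pB C6.
- apply: (mr_scale (R2 D1) (R2 A2) (R3 C2) (R5 A3) (R6 A1) (R6 C3));
    nzt.
- apply: (mr_scale (R1 D1) (R2 A4) (R3 B4) (R5 A5) (R7 A1) (R6 B5));
    nzt.
- apply: (mr_scale (R1 C3) (R1 A4) (R7 B6) (R1 C6) (R7 A2) (R7 B5));
    nzt.
Qed.
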